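(* Let $E$ be a locally convex space over $K$ and $\phi:E\to\mathbb R$ a convex function attaining its minimum value at $0$. Then: (1) $\phi(\lambda x)=\phi(x)$ for all $x\in E$ and $\lambda\in K$ with $|\lambda|=1$; (2) $\phi(x+y)\le\max(\phi(x),\phi(y))$ for all $x,y\in E$.
   Context: $K$ is a field complete with respect to a non-trivial non-archimedean absolute value, $B_K=\{x\in K:|x|\le1\}$. A function $\phi:E\to\mathbb R$ is convex if for all $n$, $x_1,\dots,x_n\in E$ and $\lambda_1,\dots,\lambda_n\in B_K$ with $\sum\lambda_i=1$ one has $\phi(\sum\lambda_ix_i)\le\max_i|\lambda_i|\phi(x_i)$. *)

(* Defs.v *)
From mathcomp Require Import all_boot all_order all_algebra.
From mathcomp Require Import reals.
Set Implicit Arguments. Unset Strict Implicit. Unset Printing Implicit Defensive.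
Import Order.TTheory GRing.Theory Num.Theory.
Local Open Scope ring_scope.

Definition nonarch_abs (R : realType) (K : fieldType) (v : K -> R) : Prop :=
  [/\ forall x, 0 <= v x,
      forall x, v x = 0 <-> x = 0,
      forall x y, v (x * y) = v x * v y,
      forall x y, v (x + y) <= Num.max (v x) (v y)
    & exists x, v x != 0 /\ v x != 1].

Definition abs_complete (R : realType) (K : fieldType) (v : K -> R) : Prop :=
  forall u : nat -> K,
    (forall e : R, 0 < e -> exists N, forall m n, (N <= m)%N -> (N <= n)%N ->
        v (u m - u n) < e) ->
    exists l : K, forall e : R, 0 < e -> exists N, forall n, (N <= n)%N ->
        v (u n - l) < e.

Definition nonarch_seminorm (R : realType) (K : fieldType) (v : K -> R)
    (E : lmodType K) (p : E -> R) : Prop :=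
  (forall (a : K) (x : E), p (a *: x) = v a * p x) /\
  (forall x y : E, p (x + y) <= Num.max (p x) (p y)).

(* A locally convex structure on E: a family of non-archimedean seminorms
   (the topology of E is the one generated by this family). *)
Definition locally_convex (R : realType) (K : fieldType) (v : K -> R)
    (E : lmodType K) (I : Type) (p : I -> E -> R) : Prop :=
  forall i, nonarch_seminorm v (p i).

(* Convexity of phi : E -> R in the sense of the paper:
   phi (sum_i l_i x_i) <= max_i |l_i| phi (x_i) whenever |l_i| <= 1 and
   sum_i l_i = 1.  (Families indexed by 'I_n.+1; n = 0 terms is vacuous
   since sum l_i = 1 forces at least one term.) *)
Definition na_convex (R : realType) (K : fieldType) (v : K -> R)
    (E : lmodType K) (phi : E -> R) : Prop :=
  forall (n : nat) (x : 'I_n.+1 -> E) (l : 'I_n.+1 -> K),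
    (forall i, v (l i) <= 1) ->
    \sum_(i < n.+1) l i = 1 ->
    phi (\sum_(i < n.+1) l i *: x i)
      <= \big[Num.max/ v (l ord0) * phi (x ord0)]_(i < n.+1) (v (l i) * phi (x i)).

(* Main.v *)
Require Import Defs.
From mathcomp Require Import all_boot all_order all_algebra.
From mathcomp Require Import reals.
From mathcomp Require Import lra.
Import Order.TTheory GRing.Theory Num.Theory.
Local Open Scope ring_scope.

Lemma three_terms (R : realType) (K : fieldType) (v : K -> R)
    (E : lmodType K) (phi : E -> R) (hphi : na_convex v phi)
    (a b c : K) (x y z : E) :
  v a <= 1 -> v b <= 1 -> v c <= 1 -> a + b + c = 1 ->
  phi (a *: x + b *: y + c *: z) <=
  Num.max (Num.max (v a * phi x) (v b * phi y)) (v c * phi z).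
Proof.
move=> ha hb hc hs.
pose X := fun i : 'I_3 => nth 0 [:: x; y; z] i.
pose L := fun i : 'I_3 => nth 0 [:: a; b; c] i.
have := hphi 2%N X L.
have hL : forall i : 'I_3, v (L i) <= 1 by case=> [[|[|[|]]]] //=.
have hsum : \sum_(i < 3) L i = 1.
  by rewrite !big_ord_recr big_ord0 /= add0r.
move=> /(_ hL hsum).
have -> : \sum_(i < 3) L i *: X i = a *: x + b *: y + c *: z.
  by rewrite !big_ord_recr big_ord0 /= add0r.
move=> H; apply: le_trans H _.
apply: (big_ind (fun t => t <= _)).
- by rewrite /L /X /= !le_max lexx.
- by move=> s t hs' ht; rewrite ge_max hs' ht.
- move=> [m Hm] _; case: m Hm => [|[|[|m]]] Hm //; rewrite /L /X /= !le_max lexx ?orbT //.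
Qed.

Arguments three_terms {R K v E phi}.

Theorem mainTheorem6 (R : realType) (K : fieldType) (v : K -> R)
    (hv : nonarch_abs v) (hK : abs_complete v)
    (E : lmodType K) (I : Type) (p : I -> E -> R) (hE : locally_convex v p)
    (phi : E -> R) (hphi : na_convex v phi)
    (hmin : forall x : E, phi 0 <= phi x) :
  (forall (x : E) (a : K), v a = 1 -> phi (a *: x) = phi x) /\
  (forall x y : E, phi (x + y) <= Num.max (phi x) (phi y)).
Proof.
case: hv => v0 vz vM _ _.
have v1 : v 1 = 1.
  have h := vM 1 1; rewrite mulr1 in h.
  have hn : v 1 != 0 by apply/eqP => /vz/eqP; rewrite oner_eq0.
  by apply: (mulfI hn); rewrite -h mulr1.
have vN1 : v (-1) = 1.
  have h := vM (-1) (-1); rewrite mulrNN mulr1 v1 in h.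
  have := v0 (-1); nra.
have vN : forall a, v (- a) = v a by move=> a; rewrite -mulN1r vM vN1 mul1r.
have le1 : forall a, v a = 1 -> forall x, phi (a *: x) <= phi x.
  move=> a ha x.
  have := three_terms hphi a 1 (- a) x 0 0.
  rewrite vN ha v1 lexx addrC addKr => /(_ isT isT isT erefl).
  rewrite !scaler0 !addr0 !mul1r => H; apply: le_trans H _.
  by rewrite !ge_max !lexx hmin.
split.
  move=> x a ha; apply/eqP; rewrite eq_le le1 //=.
  have ha0 : a != 0 by apply/eqP => h; move: ha; rewrite h (proj2 (vz 0) erefl); lra.
  have hai : v a^-1 = 1.
    have := vM a a^-1; rewrite mulfV // v1 ha mul1r; by [].
  by rewrite -{1}(scalerK ha0 x) le1.
move=> x y.
have := three_terms hphi 1 1 (- 1) x y 0.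
rewrite vN v1 lexx addrK => /(_ isT isT isT erefl).
rewrite !scale1r scaler0 addr0 !mul1r => H; apply: le_trans H _.
by rewrite ge_max lexx /= le_max hmin.
Qed.
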